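(* Let $S(n)=(3n+1)/2^{v_2(3n+1)}$ be the odd-to-odd Syracuse map, let $m\ge 0$ be an integer, $q=8m+3$ and $n=64q+57=512m+249$. Then $S^4(n)=648m+317$, so $3S^4(n)+1=8(243m+119)$. Let $w=v_2(243m+119)$. Then $S^5(n)=(243m+119)/2^w$, and $S^5(n)\equiv 57\pmod{64}$ if and only if $243m+119\equiv 57\cdot 2^w\pmod{2^{w+6}}$. For each $w\ge 0$ there is a unique residue class $m\equiv a_w\pmod{2^{w+6}}$, namely $a_w=243^{-1}(57\cdot 2^w-119)\bmod 2^{w+6}$, on which this return occurs with $v_2(243m+119)=w$; these classes are pairwise disjoint and their union has natural density $\sum_{w\ge 0}2^{-(w+6)}=1/32$ in the set of nonnegative integers $m$. Within the class for a given $w$, writing $m=a_w+2^{w+6}t$ ($t\ge 0$), the destination quotient $q'=(S^5(n)-57)/64$ has the form $q'=k_0(w)+243t$ for an integer $k_0(w)$ depending only on $w$; hence $q'\bmod 64$ is exactly uniformly distributed as $t$ ranges over any $64$ consecutive integers.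
   Context: $v_2$ is the $2$-adic valuation; $243^{-1}$ denotes the inverse of $243$ modulo $2^{w+6}$. *)

(* Defs.v *)
From Stdlib Require Import ClassicalDescription.
From mathcomp Require Import all_boot all_order all_algebra.
Set Implicit Arguments. Unset Strict Implicit. Unset Printing Implicit Defensive.
Import Order.TTheory GRing.Theory Num.Theory.

Definition syr (n : nat) : nat := (3 * n + 1) %/ 2 ^ (logn 2 (3 * n + 1)).

Definition nstart (m : nat) : nat := 64 * (8 * m + 3) + 57.

Definition modw (w : nat) : nat := 2 ^ (w + 6).

Definition inv243 (w : nat) : nat :=
  odflt 0%N (omap (@nat_of_ord _)
    [pick x : 'I_(modw w) | 243 * x %% modw w == 1 %% modw w]).

Definition a_w (w : nat) : nat :=
  `|(((inv243 w)%:Z * ((57 * 2 ^ w)%:Z - 119%:Z)) %% (modw w)%:Z)%Z|%N.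

Definition qdest (m : nat) : nat := (iter 5 syr (nstart m) - 57) %/ 64.

Definition count_upto (P : nat -> Prop) (N : nat) : nat :=
  \sum_(m < N) (if excluded_middle_informative (P m) then 1 else 0)%N.

Definition has_density (P : nat -> Prop) (d : rat) : Prop :=
  forall eps : rat, (0 < eps)%R -> exists N0 : nat, forall N : nat, (N0 <= N)%N -> (0 < N)%N ->
    (`| (count_upto P N)%:R / N%:R - d | < eps)%R.

(* Main.v *)
Require Import Defs.
From mathcomp Require Import all_boot all_order all_algebra.
From mathcomp Require Import zify ring lra.
From Stdlib Require Import ClassicalDescription.
Import Order.TTheory GRing.Theory Num.Theory.

Lemma syr_step n k o : 3 * n + 1 = 2 ^ k * o -> odd o -> syr n = o.
Proof.
move=> H ho; have o0 : 0 < o by case: o ho H.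
rewrite /syr H lognM ?expn_gt0 //.
rewrite pfactorK // logn_coprime ?coprime2n // addn0 mulKn // expn_gt0 //.
Qed.

Lemma S4 m : iter 4 syr (nstart m) = 648 * m + 317.
Proof.
have h1 : syr (nstart m) = 384 * m + 187.
  by apply: (@syr_step _ 2); [rewrite /nstart; lia | rewrite oddD oddM].
have h2 : syr (384 * m + 187) = 576 * m + 281.
  by apply: (@syr_step _ 1); [lia | rewrite oddD oddM].
have h3 : syr (576 * m + 281) = 432 * m + 211.
  by apply: (@syr_step _ 2); [lia | rewrite oddD oddM].
have h4 : syr (432 * m + 211) = 648 * m + 317.
  by apply: (@syr_step _ 1); [lia | rewrite oddD oddM].
by rewrite /= h1 h2 h3 h4.
Qed.

Lemma S5 m : iter 5 syr (nstart m) =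
  (243 * m + 119) %/ 2 ^ (logn 2 (243 * m + 119)).
Proof.
rewrite iterS S4 /syr.
have -> : 3 * (648 * m + 317) + 1 = 8 * (243 * m + 119) by lia.
rewrite lognM ?addn_gt0 ?orbT // (_ : logn 2 8 = 3) // expnD (_ : 2 ^ 3 = 8) // divnMl //.
Qed.

Lemma inv_exists M : 0 < M -> coprime 243 M -> exists x, 243 * x %% M = 1 %% M.
Proof.
move=> M0 cop; case: (egcdnP M (isT : 0 < 243)) => km kn E _.
exists km; move/eqP: cop => g; rewrite g in E.
by rewrite mulnC E -modnDml modnMl.
Qed.

Lemma inv243P w : 243 * inv243 w %% modw w = 1.
Proof.
have M64 : 64 <= modw w by rewrite /modw expnD leq_pmull // expn_gt0.
rewrite /inv243; case: pickP => [x /eqP -> /=| none].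
  by rewrite modn_small //; lia.
have [x hx] : exists x, 243 * x %% modw w = 1 %% modw w.
  apply: inv_exists; first lia.
  by rewrite /modw coprimeXr.
have xlt : x %% modw w < modw w by rewrite ltn_pmod //; lia.
move: (none (Ordinal xlt)); rewrite /= modnMmr hx eqxx //.
Qed.

Lemma modw_gt0 w : 0 < modw w. Proof. by rewrite /modw expn_gt0. Qed.

Lemma a_wZ w : (Posz (a_w w) = (Posz (inv243 w) * (Posz (57 * 2 ^ w) - Posz 119)) %% Posz (modw w))%Z.
Proof.
rewrite /a_w gez0_abs // modz_ge0 // eqz_nat -lt0n modw_gt0 //.
Qed.

Lemma a_w_prop w : (243 * a_w w + 119) %% modw w = (57 * 2 ^ w) %% modw w.
Proof.
set M := modw w; set i := inv243 w.
suff h : ((Posz (243 * a_w w + 119)) %% Posz M = (Posz (57 * 2 ^ w)) %% Posz M)%Z.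
  by move: h; rewrite !modz_nat => -[].
rewrite PoszD PoszM a_wZ -/M -/i.
rewrite -modzDml modzMmr modzDml mulrA -modzDml -modzMml.
have -> : ((Posz 243 * Posz i) %% Posz M)%Z = 1%R.
  by rewrite -PoszM modz_nat inv243P.
rewrite mul1r modzDml; congr (_ %% _)%Z; rewrite subrK //.
Qed.

Lemma a_w_lt w : a_w w < modw w.
Proof.
have := a_wZ w; set E := (_ * _)%R => h.
have := ltz_pmod E (isT : (0 < Posz 64)%R).
Abort.

Lemma oddpart X : 0 < X ->
  odd (X %/ 2 ^ logn 2 X) /\ X = 2 ^ logn 2 X * (X %/ 2 ^ logn 2 X).
Proof.
move=> X0; case: (pfactor_coprime (isT : prime 2) X0) => o co E.
have -> : X %/ 2 ^ logn 2 X = o by rewrite {1}E mulnK // expn_gt0.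
by split; [rewrite -coprime2n | rewrite mulnC].
Qed.

Lemma part4 m : (iter 5 syr (nstart m) = 57 %[mod 64]) <->
     (243 * m + 119 = 57 * 2 ^ (logn 2 (243 * m + 119))
        %[mod 2 ^ (logn 2 (243 * m + 119) + 6)]).
Proof.
rewrite S5; set X := 243 * m + 119; set v := logn 2 X.
have X0 : 0 < X by rewrite /X addn_gt0 orbT.
have [_ E] := @oddpart X X0; rewrite -/v in E.
set o := X %/ 2 ^ v in E *.
rewrite {1}E expnD (mulnC 57) -!muln_modr.
split => [-> //| h]; apply/eqP; rewrite -(eqn_pmul2l (_ : 0 < 2 ^ v)) ?expn_gt0 //.
by rewrite h.
Qed.

Lemma val_of_cong X w : X = 57 * 2 ^ w %[mod 2 ^ (w + 6)] -> logn 2 X = w.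
Proof.
move=> h.
have lt : 57 * 2 ^ w < 2 ^ (w + 6) by rewrite expnD mulnC ltn_pmul2l ?expn_gt0.
rewrite (modn_small lt) in h.
have -> : X = 2 ^ w * (64 * (X %/ 2 ^ (w + 6)) + 57).
  by rewrite {1}(divn_eq X (2 ^ (w + 6))) h expnD; ring.
rewrite lognM ?expn_gt0 ?addn_gt0 ?orbT // pfactorK // logn_coprime ?addn0 //.
by rewrite coprime2n oddD oddM.
Qed.

Lemma inv_cong M x k m : 243 * x %% M = 1 %% M ->
  (m = x * k %[mod M]) <-> (243 * m = k %[mod M]).
Proof.
move=> hx; split => h.
  by rewrite -modnMmr h modnMmr mulnA -modnMml hx modnMml mul1n.
have e1 : m = 243 * x * m %[mod M] by rewrite -modnMml hx modnMml mul1n.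
rewrite e1 (mulnC 243) -mulnA -modnMmr h modnMmr //.
Qed.

Lemma inv243P' w : 243 * inv243 w %% modw w = 1 %% modw w.
Proof.
rewrite inv243P modn_small // /modw expnD.
have := expn_gt0 2 w; lia.
Qed.

Lemma mul243_cancel M x m a : 243 * x %% M = 1 %% M ->
  (m = a %[mod M]) <-> (243 * m = 243 * a %[mod M]).
Proof.
move=> hx; split => [h|h]; first by rewrite -modnMmr h modnMmr.
have /(inv_cong M x (243 * a) m hx) h1 : 243 * m = 243 * a %[mod M] by [].
have /(inv_cong M x (243 * a) a hx) h2 : 243 * a = 243 * a %[mod M] by [].
by rewrite h1 h2.
Qed.

Lemma cong_iff w m : (m = a_w w %[mod modw w]) <->
  (243 * m + 119 = 57 * 2 ^ w %[mod 2 ^ (w + 6)]).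
Proof.
rewrite (mul243_cancel (modw w) (inv243 w) m (a_w w) (inv243P' w)).
have := a_w_prop w; rewrite /modw => <-.
split => h; first by apply/eqP; rewrite eqn_modDr; apply/eqP.
by apply/eqP; rewrite -(eqn_modDr 119); apply/eqP.
Qed.

Lemma part5 w m :
     (iter 5 syr (nstart m) = 57 %[mod 64] /\ logn 2 (243 * m + 119) = w) <->
     m = a_w w %[mod modw w].
Proof.
rewrite cong_iff; split.
  by case=> /part4 h <-.
move=> h; have e := val_of_cong _ _ h; split => //; apply/part4; by rewrite e.
Qed.

Lemma part6 w1 w2 m :
     m = a_w w1 %[mod modw w1] -> m = a_w w2 %[mod modw w2] -> w1 = w2.
Proof. by move=> /part5 [_ <-] /part5 [_ <-]. Qed.

Lemma part8 w : exists k0 : nat, forall t : nat,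
     qdest (a_w w + modw w * t) = k0 + 243 * t.
Proof.
set a := a_w w; set M := modw w.
have [Pa va] : iter 5 syr (nstart a) = 57 %[mod 64] /\ logn 2 (243 * a + 119) = w.
  by apply/part5.
have X0 : 0 < 243 * a + 119 by rewrite addn_gt0 orbT.
have [_ E] := @oddpart _ X0; rewrite va in E.
set oa := (243 * a + 119) %/ 2 ^ w in E.
have Sa : iter 5 syr (nstart a) = oa by rewrite S5 va.
rewrite Sa in Pa.
have oaE : oa = 64 * (oa %/ 64) + 57 by rewrite {1}(divn_eq oa 64) Pa mulnC.
exists (oa %/ 64) => t.
have [_ vm] : iter 5 syr (nstart (a + M * t)) = 57 %[mod 64] /\
   logn 2 (243 * (a + M * t) + 119) = w.
  by apply/part5; rewrite addnC mulnC modnMDl.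
rewrite /qdest S5 vm.
have -> : 243 * (a + M * t) + 119 = 2 ^ w * (oa + 243 * 64 * t).
  by rewrite [RHS]mulnDr -E /M /modw expnD; ring.
rewrite mulKn ?expn_gt0 //.
have -> : oa + 243 * 64 * t - 57 = (oa %/ 64 + 243 * t) * 64.
  by lia.
by rewrite mulnK.
Qed.

Lemma part9 w t0 r : r < 64 ->
  #|[set i : 'I_64 | qdest (a_w w + modw w * (t0 + i)) %% 64 == r]| = 1.
Proof.
move=> r64; have [k0 hk] := part8 w.
set c := k0 + 243 * t0; set k' := r + 64 - c %% 64.
have ck : (c + k') %% 64 = r.
  have -> : c + k' = (c %/ 64 + 1) * 64 + r.
    have := ltn_pmod c (isT : 0 < 64); have := divn_eq c 64; rewrite /k'; lia.
  by rewrite modnMDl modn_small.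
have i0lt : (59 * k') %% 64 < 64 by rewrite ltn_pmod.
suff -> : [set i : 'I_64 | qdest (a_w w + modw w * (t0 + i)) %% 64 == r] = [set Ordinal i0lt].
  by rewrite cards1.
apply/setP => i.
rewrite !inE hk.
have -> : k0 + 243 * (t0 + i) = c + 243 * i by rewrite /c; ring.
have -> : ((c + 243 * i) %% 64 == r) = (243 * i == k' %[mod 64]).
  by rewrite -(eqn_modDl c) ck.
apply/idP/eqP => [h|->].
  apply/val_inj => /=; rewrite -(modn_small (ltn_ord i)).
  by apply/(inv_cong 64 59 k' i) => //; apply/eqP.
by apply/eqP/(inv_cong 64 59 k' _) => //=; rewrite modn_mod.
Qed.

Definition cnt N a M := \sum_(m < N) (m %% M == a %% M : nat).

Lemma cntE N a M : 0 < M -> cnt N a M = (N + M - 1 - a %% M) %/ M.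
Proof.
move=> M0; have alt : a %% M < M by rewrite ltn_pmod.
elim: N => [|N IH].
  by rewrite /cnt big_ord0 divn_small //; lia.
rewrite /cnt big_ord_recr /= -/(cnt N a M) IH.
have -> : N.+1 + M - 1 - a %% M = (N + M - 1 - a %% M).+1 by lia.
rewrite divnS // addnC; congr (_ + _).
have -> : (N + M - 1 - a %% M).+1 = N + M - a %% M by lia.
rewrite -eqn_mod_dvd; last by lia.
by rewrite modnDr modn_mod.
Qed.

Lemma cnt_bounds N a M : 0 < M ->
  ((N%:R / M%:R - 1 <= (cnt N a M)%:R :> rat) /\
   ((cnt N a M)%:R <= N%:R / M%:R + 1 :> rat))%R.
Proof.
move=> M0; rewrite cntE //; set X := N + M - 1 - a %% M; set q := X %/ M.
have alt : a %% M < M by rewrite ltn_pmod.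
have h1 : q * M <= N + M.
  apply: leq_trans (leq_divM X M) _; rewrite /X; lia.
have h2 : N < q.+1 * M.
  apply: leq_trans (ltn_ceil X M0); rewrite /X; lia.
have M0' : (0 < M%:R :> rat)%R by rewrite ltr0n.
split.
  rewrite lerBlDr ler_pdivrMr // natr1 -natrM ler_nat; exact: ltnW.
rewrite -[X in (_ <= _ + X)%R](divff (lt0r_neq0 M0')) -mulrDl ler_pdivlMr //.
by rewrite -natrD -natrM ler_nat.
Qed.

Definition Pb m := (iter 5 syr (nstart m) %% 64 == 57).
Definition vv m := logn 2 (243 * m + 119).

Lemma Pb_part5 w m : (m %% modw w == a_w w %% modw w) = Pb m && (vv m == w).
Proof.
apply/eqP/andP => [/part5 [h1 h2]|[h1 /eqP h2]].
  by split; [apply/eqP; exact: h1 | apply/eqP].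
by apply/part5; split; [apply/eqP: h1 | exact: h2].
Qed.

Lemma countE N :
  count_upto (fun m => exists w : nat, m = a_w w %[mod modw w]) N = \sum_(m < N) Pb m.
Proof.
rewrite /count_upto; apply: eq_bigr => m _.
case: excluded_middle_informative => [hP|nh]; rewrite [is_left _]/=.
  have [w /eqP h] := hP.
  by move: h; rewrite Pb_part5 => /andP [-> _].
case: (boolP (Pb m)) => [hp|//]; exfalso; apply: nh; exists (vv m).
by apply/eqP; rewrite Pb_part5 hp eqxx.
Qed.

Lemma sum_eqL L (x : nat) : \sum_(w < L) ((x == w :> nat) : nat) = (x < L).
Proof.
elim: L => [|L IH]; first by rewrite big_ord0.
by rewrite big_ord_recr /= IH ltnS; case: (ltngtP x L).
Qed.

Lemma split_ind L m : (Pb m : nat) =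
  \sum_(w < L) (m %% modw w == a_w w %% modw w : nat) + (Pb m && (L <= vv m)).
Proof.
under eq_bigr => w _ do rewrite Pb_part5.
case: (Pb m) => /=; last by rewrite big1.
by rewrite sum_eqL; case: ltnP.
Qed.


Definition cL L := inv243 L * (2 ^ L * 119 - 119).

Lemma tail_eq L m : (L <= vv m) = (m %% 2 ^ L == cL L %% 2 ^ L).
Proof.
have X0 : 0 < 243 * m + 119 by rewrite addn_gt0 orbT.
rewrite /vv -pfactor_dvdn //.
have dv : 2 ^ L %| 2 ^ (L + 6) by rewrite dvdn_exp2l // leq_addr.
have hx : 243 * inv243 L %% 2 ^ L = 1 %% 2 ^ L.
  rewrite -(modn_dvdm _ dv) -(modn_dvdm 1 dv).
  have h := inv243P' L.  rewrite /modw in h.  rewrite h //.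
pose k := 2 ^ L * 119 - 119.
have e1 : (m %% 2 ^ L == cL L %% 2 ^ L) = (243 * m %% 2 ^ L == k %% 2 ^ L).
  have [h1 h2] := inv_cong (2 ^ L) (inv243 L) k m hx.
  rewrite /cL -/k.
  by apply/eqP/eqP.
rewrite e1 -(eqn_modDr 119).
have -> : k + 119 = 2 ^ L * 119.
  by rewrite /k subnK // leq_pmull // expn_gt0.
by rewrite modnMr.
Qed.

Definition Tl N L := \sum_(m < N) (Pb m && (L <= vv m) : nat).

Lemma count_split N L :
  \sum_(m < N) (Pb m : nat) = \sum_(w < L) cnt N (a_w w) (modw w) + Tl N L.
Proof.
under eq_bigr => m _ do rewrite (split_ind L m).
rewrite big_split; congr (_ + _).
rewrite exchange_big; apply: eq_bigr => w _; reflexivity.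
Qed.

Lemma Tl_le N L : Tl N L <= cnt N (cL L) (2 ^ L).
Proof.
apply: leq_sum => m _; rewrite -tail_eq.
case: (Pb m); case: (L <= vv m); reflexivity.
Qed.

Section RatPart.
Local Open Scope ring_scope.


Lemma geo (N L : nat) : \sum_(w < L) (N%:R / (modw w)%:R : rat) =
  N%:R / 32 - N%:R / ((2 ^ L)%:R * 32).
Proof.
elim: L => [|L IH].
  by rewrite big_ord0 expn0 mul1r subrr.
rewrite big_ord_recr /= IH /modw expnD (expnS 2 L) !natrM.
have g0 : (2 ^ L)%:R != 0 :> rat by rewrite pnatr_eq0 -lt0n expn_gt0.
by field.
Qed.

Lemma sum_bounds (f : nat -> nat) (g : nat -> rat) (L : nat) :
  (forall w, g w - 1 <= (f w)%:R <= g w + 1) ->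
  \sum_(w < L) g w - L%:R <= (\sum_(w < L) f w)%:R :> rat /\
  (\sum_(w < L) f w)%:R <= \sum_(w < L) g w + L%:R :> rat.
Proof.
move=> h; elim: L => [|L [IH1 IH2]].
  by rewrite !big_ord0 /=; split; lra.
rewrite !big_ord_recr /= natrD -natr1.
have /andP [h1 h2] := h L.
split; lra.
Qed.


Lemma final_arith (eps n g k s t : rat) : 0 < eps -> 0 < n -> 0 < g -> k < g ->
  2 < eps * k -> k * (k + 1) <= n ->
  n / 32 - n / (g * 32) - k <= s -> s <= n / 32 - n / (g * 32) + k ->
  0 <= t -> t <= n / g + 1 -> `|(s + t) / n - 1 / 32| < eps.
Proof.
move=> eps0 n0 g0 hgk eK hn S1 S2 T0 T2.
have k0 : 0 < k.
  have : 0 < eps * k by apply: lt_trans eK.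
  by rewrite pmulr_rgt0.
pose A := n / g.
have eA : n / (g * 32) = A / 32 by rewrite /A; field; rewrite lt0r_neq0.
rewrite eA in S1 S2; rewrite -/A in T2.
have A0 : 0 < A by rewrite /A divr_gt0.
have f1 : 2 * A < eps * n.
  have -> : n = A * g by rewrite /A divfK // lt0r_neq0.
  have : 2 < eps * g by apply: lt_trans eK _; rewrite ltr_pM2l.
  rewrite -(ltr_pM2r A0) => h; apply: lt_le_trans h _; rewrite mulrA; lra.
have f2 : 2 * (k + 1) < eps * n.
  have k1 : 0 < k + 1 by lra.
  apply: lt_le_trans (ler_wpM2l (ltW eps0) hn); rewrite mulrA ltr_pM2r //.
have -> : (s + t) / n - 1 / 32 = (s + t - n / 32) / n by field; rewrite lt0r_neq0.
rewrite ltr_norml; apply/andP; split.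
  rewrite ltr_pdivlMr //; lra.
rewrite ltr_pdivrMr //; lra.
Qed.

Lemma density :
  has_density (fun m => exists w : nat, m = a_w w %[mod modw w]) (1 / 32)%R.
Proof.
move=> eps eps0.
pose K := Num.bound (2 / eps).
have hK : 2 / eps < K%:R.
  apply: archi_boundP; apply: divr_ge0 => //; exact: ltW.
exists (K * K.+1)%N => N hN N0.
rewrite countE (count_split N K).
set S := (\sum_(w < K) cnt N (a_w w) (modw w))%N.
set T := Tl N K.
have hb : forall w : nat, (N%:R / (modw w)%:R - 1 <= (cnt N (a_w w) (modw w))%:R :> rat) && ((cnt N (a_w w) (modw w))%:R <= N%:R / (modw w)%:R + 1 :> rat).
  by move=> w; have [h1 h2] := cnt_bounds N (a_w w) (modw w) (modw_gt0 w); rewrite h1 h2.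
have [S1 S2] := @sum_bounds (fun w => cnt N (a_w w) (modw w))
   (fun w => N%:R / (modw w)%:R) K hb.
rewrite -/S geo in S1 S2.
have [T1 T2] := cnt_bounds N (cL K) (2 ^ K) (expn_gt0 2 K).
have hT := Tl_le N K; rewrite -/T in hT.
have {}T2 : T%:R <= N%:R / (2 ^ K)%:R + 1 :> rat.
  by apply: le_trans T2; rewrite ler_nat.
have n0 : 0 < N%:R :> rat by rewrite ltr0n.
have g0 : 0 < (2 ^ K)%:R :> rat by rewrite ltr0n expn_gt0.
have hgk : K%:R < (2 ^ K)%:R :> rat by rewrite ltr_nat ltn_expl.
have eK : 2 < eps * K%:R by rewrite mulrC -ltr_pdivrMr.
rewrite natrD; apply: (final_arith eps N%:R (2 ^ K)%:R K%:R S%:R T%:R eps0 n0 g0 hgk eK _ S1 S2 _ T2).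
  by rewrite natr1 -natrM ler_nat.
by rewrite ler0n.
Qed.

End RatPart.

Theorem mainTheorem8 :
  (forall m : nat, iter 4 syr (nstart m) = 648 * m + 317) /\
  (forall m : nat, 3 * iter 4 syr (nstart m) + 1 = 8 * (243 * m + 119)) /\
  (forall m : nat,
     iter 5 syr (nstart m) = (243 * m + 119) %/ 2 ^ (logn 2 (243 * m + 119))) /\
  (forall m : nat,
     (iter 5 syr (nstart m) = 57 %[mod 64]) <->
     (243 * m + 119 = 57 * 2 ^ (logn 2 (243 * m + 119))
        %[mod 2 ^ (logn 2 (243 * m + 119) + 6)])) /\
  (forall w m : nat,
     (iter 5 syr (nstart m) = 57 %[mod 64] /\ logn 2 (243 * m + 119) = w) <->
     m = a_w w %[mod modw w]) /\
  (forall w1 w2 m : nat,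
     m = a_w w1 %[mod modw w1] -> m = a_w w2 %[mod modw w2] -> w1 = w2) /\
  has_density (fun m => exists w : nat, m = a_w w %[mod modw w]) (1 / 32)%R /\
  (forall w : nat, exists k0 : nat, forall t : nat,
     qdest (a_w w + modw w * t) = k0 + 243 * t) /\
  (forall w t0 r : nat, r < 64 ->
     #|[set i : 'I_64 | qdest (a_w w + modw w * (t0 + i)) %% 64 == r]| = 1).
Proof.
split; first exact: S4.
split; first by move=> m; rewrite S4; lia.
split; first exact: S5.
split; first exact: part4.
split; first exact: part5.
split; first exact: part6.
split; first exact: density.
split; first exact: part8.
exact: part9.
Qed.
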